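(* Let $X,Y,F,\hat A,y,u^\dagger,\rho,\nu,L_F,L_{\hat A},u_0$ satisfy the hypotheses of the noise-free convergence theorem stated in the context, and let $\bar u$ be the limit of the noise-free iteration $(u_k)$ (so $F(\bar u)=y$). Let $\delta_n\to0$, $y_n\in Y$ with $\|y_n-y\|\le\delta_n$, and let $(u^{\delta_n}_k)_k$ be generated from $u^{\delta_n}_0=u_0$ by $$u^{\delta_n}_{k+1}=u^{\delta_n}_k-F'(u^{\delta_n}_k)^*(F(u^{\delta_n}_k)-y_n)-\lambda^{\delta_n}_k\hat A'(u^{\delta_n}_k)^*(\hat A(u^{\delta_n}_k)-y_n),$$ where the step parameters are given by $\lambda^{\delta_n}_k=\varphi_k(u^{\delta_n}_k,y_n)$ and $\lambda_k=\varphi_k(u_k,y)$ for functions $\varphi_k:X\times Y\to[0,\infty)$ continuous at the relevant points. Let $\tau>0$ with $C_\tau:=1-L_F^2-\nu-\frac{1+\nu}{\tau}\ge0$, and assume that for all $n$ and all $k<k_n$ the conditions $\lambda^{\delta_n}_kL_{\hat A}C^{\delta_n}_{\hat A}\le\rho$, $\lambda^{\delta_n}_k\le C_\lambda\|F(u^{\delta_n}_k)-y_n\|^2$ hold, with $C^{\delta_n}_{\hat A}:=L_{\hat A}\rho+\|\hat A(u^\dagger)\|+\|y_n\|$ and a constant $C_\lambda>0$ with $C_\tau-2L_{\hat A}C^{\delta_n}_{\hat A}C_\lambda\rho>0$ for all $n$. Let $k_n=k_*(\delta_n,y_n)$ be the stopping index of the discrepancy principle, i.e. the first index with $\|F(u^{\delta_n}_{k_n})-y_n\|\le\tau\delta_n$.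 Then $u^{\delta_n}_{k_n}\to\bar u$ as $n\to\infty$; i.e. the discrepancy-stopped iteration converges to a solution of $F(u)=y$ as $\delta\to0$.
   Context: $\mathcal{B}_\rho(v)$ denotes the closed ball of radius $\rho$ centred at $v$; $X,Y$ real Hilbert spaces; $^*$ the Hilbert adjoint. Noise-free convergence theorem hypotheses: $F(u^\dagger)=y$; there is $\rho>0$ with $\mathcal{B}_\rho(u^\dagger)\subseteq\mathcal{B}_{2\rho}(u_0)$, $\mathcal B_\rho(u^\dagger)\subseteq\mathcal D(F)\cap\mathcal D(\hat A)$, $u_0\in\mathcal B_\rho(u^\dagger)$; $\|F(u)-F(\tilde u)-F'(u)(u-\tilde u)\|\le\nu\|F(u)-F(\tilde u)\|$ for all $u,\tilde u\in\mathcal B_\rho(u^\dagger)$ with $\nu>0$; $F,\hat A$ continuously Fréchet differentiable on $\mathcal B_\rho(u^\dagger)$ with $\|F'(u)\|\le L_F$, $\|\hat A'(u)\|\le L_{\hat A}$ there; $\|\hat A(u^\dagger)-y\|\ge C_N>0$; the noise-free iteration $u_{k+1}=u_k-F'(u_k)^*(F(u_k)-y)-\lambda_k\hat A'(u_k)^*(\hat A(u_k)-y)$ has $\lambda_kL_{\hat A}C^0_{\hat A}\le\rho$, $\lambda_k\le C^0_\lambda\|F(u_k)-y\|^2$ for all $k$, where $C^0_{\hat A}=L_{\hat A}\rho+\|\hat A(u^\dagger)\|+\|y\|$ and $1-\nu-L_F^2-2L_{\hat A}C^0_{\hat A}C^0_\lambda\rho>0$. Under these hypotheses the noise-free iterates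 converge to some $\bar u$ with $F(\bar u)=y$. *)

(* Defs.v *)
From Stdlib Require Import Reals.
Open Scope R_scope.

Record Hilbert := MkHilbert {
  hcarrier :> Type;
  hzero : hcarrier;
  hadd : hcarrier -> hcarrier -> hcarrier;
  hopp : hcarrier -> hcarrier;
  hscal : R -> hcarrier -> hcarrier;
  hinner : hcarrier -> hcarrier -> R;
  hadd_assoc : forall x y z, hadd x (hadd y z) = hadd (hadd x y) z;
  hadd_comm : forall x y, hadd x y = hadd y x;
  hadd_zero : forall x, hadd hzero x = x;
  hadd_opp : forall x, hadd x (hopp x) = hzero;
  hscal_one : forall x, hscal 1 x = x;
  hscal_assoc : forall a b x, hscal a (hscal b x) = hscal (a * b) x;
  hscal_distr_l : forall a x y, hscal a (hadd x y) = hadd (hscal a x) (hscal a y);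
  hscal_distr_r : forall a b x, hscal (a + b) x = hadd (hscal a x) (hscal b x);
  hinner_sym : forall x y, hinner x y = hinner y x;
  hinner_add_l : forall x y z, hinner (hadd x y) z = hinner x z + hinner y z;
  hinner_scal_l : forall a x y, hinner (hscal a x) y = a * hinner x y;
  hinner_pos : forall x, 0 <= hinner x x;
  hinner_def : forall x, hinner x x = 0 -> x = hzero;
  hcomplete : forall s : nat -> hcarrier,
    (forall eps, 0 < eps -> exists N, forall m n, (N <= m)%nat -> (N <= n)%nat ->
        sqrt (hinner (hadd (s m) (hopp (s n))) (hadd (s m) (hopp (s n)))) < eps) ->
    exists l, forall eps, 0 < eps -> exists N, forall n, (N <= n)%nat ->
        sqrt (hinner (hadd (s n) (hopp l)) (hadd (s n) (hopp l))) < eps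
}.

Arguments hzero {h}.
Arguments hadd {h}.
Arguments hopp {h}.
Arguments hscal {h}.
Arguments hinner {h}.

Definition hsub {H : Hilbert} (x y : H) : H := hadd x (hopp y).
Definition hnorm {H : Hilbert} (x : H) : R := sqrt (hinner x x).

Declare Scope hilbert_scope.
Infix "+v" := hadd (at level 50, left associativity) : hilbert_scope.
Infix "-v" := hsub (at level 50, left associativity) : hilbert_scope.
Infix "*v" := hscal (at level 40, left associativity) : hilbert_scope.
Open Scope hilbert_scope.

Definition in_ball {H : Hilbert} (v : H) (rho : R) (u : H) : Prop :=
  hnorm (u -v v) <= rho.

Definition hconverges {H : Hilbert} (s : nat -> H) (l : H) : Prop :=
  forall eps, 0 < eps -> exists N, forall n, (N <= n)%nat -> hnorm (s n -v l) < eps.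

Definition is_linear {X Y : Hilbert} (T : X -> Y) : Prop :=
  (forall x z, T (x +v z) = T x +v T z) /\ (forall a x, T (a *v x) = a *v T x).

Definition opnorm_le {X Y : Hilbert} (T : X -> Y) (L : R) : Prop :=
  forall h, hnorm (T h) <= L * hnorm (h).

Definition bounded_linear {X Y : Hilbert} (T : X -> Y) : Prop :=
  is_linear T /\ exists C, opnorm_le T C.

Definition frechet_deriv {X Y : Hilbert} (F : X -> Y) (u : X) (T : X -> Y) : Prop :=
  bounded_linear T /\
  forall eps, 0 < eps -> exists d, 0 < d /\
    forall h, hnorm (h) < d -> hnorm (F (u +v h) -v F u -v T h) <= eps * hnorm (h).

Definition is_adjoint {X Y : Hilbert} (T : X -> Y) (Ts : Y -> X) : Prop :=
  forall h k, hinner (T h) k = hinner h (Ts k).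

Definition C1_on_ball {X Y : Hilbert} (F : X -> Y) (DF : X -> X -> Y) (v : X) (rho : R) : Prop :=
  (forall u, in_ball v rho u -> frechet_deriv F u (DF u)) /\
  (forall u, in_ball v rho u -> forall eps, 0 < eps -> exists d, 0 < d /\
     forall w, in_ball v rho w -> hnorm (w -v u) < d ->
       opnorm_le (fun h => DF w h -v DF u h) eps).

(** The iteration
    u_{k+1} = u_k - F'(u_k)^*(F(u_k) - yv) - phi_k(u_k,yv) Â'(u_k)^*(Â(u_k) - yv),
    u_0 = u0; here DFs u = F'(u)^*, DAs u = Â'(u)^*. *)
Fixpoint iterate {X Y : Hilbert} (F : X -> Y) (DFs : X -> Y -> X)
    (A : X -> Y) (DAs : X -> Y -> X) (phi : nat -> X -> Y -> R)
    (yv : Y) (u0 : X) (k : nat) : X :=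
  match k with
  | O => u0
  | S k' =>
      let uk := iterate F DFs A DAs phi yv u0 k' in
      uk -v DFs uk (F uk -v yv) -v (phi k' uk yv) *v DAs uk (A uk -v yv)
  end.

(* Main.v *)
Require Import Defs.
From Stdlib Require Import Reals Lra Psatz Lia Classical.
Open Scope R_scope.
Open Scope hilbert_scope.

Lemma inner_zero_l {H : Hilbert} (h : H) : hinner hzero h = 0.
Proof.
  pose proof (hinner_add_l H hzero hzero h) as E.
  rewrite hadd_zero in E. lra.
Qed.

Lemma inner_opp_l {H : Hilbert} (x h : H) : hinner (hopp x) h = - hinner x h.
Proof.
  pose proof (hinner_add_l H x (hopp x) h) as E.
  rewrite hadd_opp, inner_zero_l in E. lra.
Qed.

Lemma inner_sub_l {H : Hilbert} (x z h : H) : hinner (x -v z) h = hinner x h - hinner z h.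
Proof. unfold hsub. rewrite hinner_add_l, inner_opp_l. ring. Qed.

Lemma inner_add_r {H : Hilbert} (x y z : H) : hinner x (y +v z) = hinner x y + hinner x z.
Proof. rewrite !(hinner_sym H x). apply hinner_add_l. Qed.
Lemma inner_scal_r {H : Hilbert} a (x y : H) : hinner x (a *v y) = a * hinner x y.
Proof. rewrite !(hinner_sym H x). apply hinner_scal_l. Qed.
Lemma inner_opp_r {H : Hilbert} (x y : H) : hinner x (hopp y) = - hinner x y.
Proof. rewrite !(hinner_sym H x). apply inner_opp_l. Qed.
Lemma inner_sub_r {H : Hilbert} (x y z : H) : hinner x (y -v z) = hinner x y - hinner x z.
Proof. rewrite !(hinner_sym H x). apply inner_sub_l. Qed.
Lemma inner_zero_r {H : Hilbert} (h : H) : hinner h hzero = 0.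
Proof. rewrite hinner_sym. apply inner_zero_l. Qed.

Lemma hext {H : Hilbert} (x z : H) : (forall h, hinner x h = hinner z h) -> x = z.
Proof.
  intros E.
  assert (hinner (x -v z) (x -v z) = 0) as E2.
  { rewrite inner_sub_l, (E (x -v z)). ring. }
  apply hinner_def in E2.
  transitivity ((x -v z) +v z).
  - unfold hsub. rewrite <- hadd_assoc, (hadd_comm H (hopp z)), hadd_opp, hadd_comm, hadd_zero. reflexivity.
  - rewrite E2, hadd_zero. reflexivity.
Qed.

Ltac hexp := repeat (rewrite ?hinner_add_l, ?inner_sub_l, ?inner_opp_l, ?hinner_scal_l, ?inner_zero_l).
Ltac hsolve := apply hext; intro; hexp; ring.

Lemma hnorm_nonneg {H : Hilbert} (x : H) : 0 <= hnorm x.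
Proof. apply sqrt_pos. Qed.
Lemma hnorm_sq {H : Hilbert} (x : H) : hnorm x * hnorm x = hinner x x.
Proof. apply sqrt_sqrt, hinner_pos. Qed.
Lemma hnorm_pow2 {H : Hilbert} (x : H) : hnorm x ^ 2 = hinner x x.
Proof. rewrite <- hnorm_sq. ring. Qed.
Lemma hnorm_zero {H : Hilbert} : hnorm (@hzero H) = 0.
Proof. unfold hnorm. rewrite inner_zero_l. apply sqrt_0. Qed.
Lemma hnorm_eq0 {H : Hilbert} (x : H) : hnorm x = 0 -> x = hzero.
Proof. intro E. apply hinner_def. rewrite <- hnorm_sq, E. ring. Qed.
Lemma hsub_eq0 {H : Hilbert} (x z : H) : x -v z = hzero -> x = z.
Proof. intro E. apply hext. intro h. pose proof (inner_sub_l x z h) as E2. rewrite E, inner_zero_l in E2. lra. Qed.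
Lemma hnorm_sub_eq0 {H : Hilbert} (x z : H) : hnorm (x -v z) = 0 -> x = z.
Proof. intro. apply hsub_eq0, hnorm_eq0; auto. Qed.
Lemma hsub_self {H : Hilbert} (x : H) : x -v x = hzero.
Proof. hsolve. Qed.

Lemma inner_expand2 {H : Hilbert} (x y : H) t :
  hinner (x +v t *v y) (x +v t *v y) = hinner x x + 2 * t * hinner x y + t * t * hinner y y.
Proof.
  hexp. rewrite !inner_add_r, !inner_scal_r, (hinner_sym H y x). ring.
Qed.

Lemma cs_sq {H : Hilbert} (x y : H) : hinner x y ^ 2 <= hinner x x * hinner y y.
Proof.
  destruct (Req_dec (hinner y y) 0) as [E|E].
  - apply hinner_def in E. rewrite E, inner_zero_r, inner_zero_l. lra.
  - pose proof (hinner_pos H y). pose proof (hinner_pos H x).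
    pose proof (hinner_pos H (x +v (- hinner x y / hinner y y) *v y)) as P.
    rewrite inner_expand2 in P.
    assert (0 < hinner y y) by lra.
    set (c := hinner y y) in *. set (b := hinner x y) in *. set (a := hinner x x) in *.
    assert (a + 2 * (- b / c) * b + (- b / c) * (- b / c) * c = a - b * b / c) as E2 by (field; lra).
    rewrite E2 in P.
    assert (Hq : b * b / c <= a) by lra.
    apply (Rmult_le_compat_r c) in Hq; [|lra].
    replace (b * b / c * c) with (b*b) in Hq by (field; lra). nra.
Qed.

Lemma sq_le {a b : R} : 0 <= b -> a * a <= b * b -> a <= b.
Proof. intros. nra. Qed.

Lemma cs {H : Hilbert} (x y : H) : Rabs (hinner x y) <= hnorm x * hnorm y.
Proof.
  pose proof (cs_sq x y). pose proof (hnorm_nonneg x). pose proof (hnorm_nonneg y).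
  rewrite <- !hnorm_sq in H0.
  apply sq_le; [nra|]. rewrite <- Rabs_mult, Rabs_pos_eq by nra. nra.
Qed.
Lemma cs' {H : Hilbert} (x y : H) : hinner x y <= hnorm x * hnorm y.
Proof. pose proof (cs x y). pose proof (Rle_abs (hinner x y)). lra. Qed.
Lemma cs'' {H : Hilbert} (x y : H) : - (hnorm x * hnorm y) <= hinner x y.
Proof. pose proof (cs x y). pose proof (Rle_abs (- hinner x y)). rewrite Rabs_Ropp in H1. lra. Qed.


Lemma htri {H : Hilbert} (x y : H) : hnorm (x +v y) <= hnorm x + hnorm y.
Proof.
  apply sq_le. pose proof (hnorm_nonneg x); pose proof (hnorm_nonneg y); lra.
  rewrite hnorm_sq. hexp. rewrite !inner_add_r, (hinner_sym H y x).
  pose proof (cs' x y). rewrite <- !hnorm_sq. nra.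
Qed.
Lemma hnorm_opp {H : Hilbert} (x : H) : hnorm (hopp x) = hnorm x.
Proof. unfold hnorm. rewrite inner_opp_l, inner_opp_r. f_equal. ring. Qed.
Lemma htri_sub {H : Hilbert} (x y : H) : hnorm (x -v y) <= hnorm x + hnorm y.
Proof. unfold hsub. rewrite <- (hnorm_opp y). apply htri. Qed.
Lemma hnorm_sub_sym {H : Hilbert} (x y : H) : hnorm (x -v y) = hnorm (y -v x).
Proof. replace (x -v y) with (hopp (y -v x)) by hsolve. apply hnorm_opp. Qed.
Lemma hnorm_scal {H : Hilbert} a (x : H) : hnorm (a *v x) = Rabs a * hnorm x.
Proof.
  unfold hnorm. rewrite hinner_scal_l, inner_scal_r, <- Rmult_assoc, sqrt_mult_alt.
  - f_equal. apply sqrt_Rsqr_abs.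
  - nra.
Qed.
Lemma hdist_tri {H : Hilbert} (x y z : H) : hnorm (x -v z) <= hnorm (x -v y) + hnorm (y -v z).
Proof. replace (x -v z) with ((x -v y) +v (y -v z)) by hsolve. apply htri. Qed.

Lemma norm_le_of_inner {H : Hilbert} (D : H) K : 0 <= K -> (forall h, hinner h D <= K * hnorm h) -> hnorm D <= K.
Proof.
  intros HK HB. specialize (HB D). rewrite <- hnorm_sq in HB.
  pose proof (hnorm_nonneg D). nra.
Qed.

Lemma adj_bound {X Y : Hilbert} (T : X -> Y) Ts L :
  0 <= L -> is_adjoint T Ts -> opnorm_le T L -> opnorm_le Ts L.
Proof.
  intros HL Ha Hn k. apply norm_le_of_inner.
  - apply Rmult_le_pos; auto; apply hnorm_nonneg.
  - intro h. rewrite <- Ha. pose proof (cs' (T h) k). pose proof (Hn h).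
    pose proof (hnorm_nonneg k). nra.
Qed.

Lemma mvt_bound {X Y : Hilbert} (G : X -> Y) (DG : X -> X -> Y) (c : X) rho L u :
  0 <= L ->
  (forall v, in_ball c rho v -> frechet_deriv G v (DG v)) ->
  (forall v, in_ball c rho v -> opnorm_le (DG v) L) ->
  in_ball c rho u -> hnorm (G u -v G c) <= L * hnorm (u -v c).
Proof.
  intros HL Hfd Hop Hu.
  set (w := u -v c). set (q := G u -v G c).
  set (p := fun t => c +v t *v w).
  set (g := fun t => hinner (G (p t)) q).
  set (g' := fun t => hinner (DG (p t) w) q).
  assert (Hin : forall t, 0 <= t <= 1 -> in_ball c rho (p t)).
  { intros t Ht. unfold in_ball, p.
    replace ((c +v t *v w) -v c) with (t *v w) by hsolve.
    rewrite hnorm_scal, Rabs_pos_eq by lra. unfold in_ball in Hu. fold w in Hu.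
    pose proof (hnorm_nonneg w). nra. }
  pose proof (hnorm_nonneg w) as Nw. pose proof (hnorm_nonneg q) as Nq.
  assert (Hd : forall t, 0 <= t <= 1 -> derivable_pt_lim g t (g' t)).
  { intros t Ht eps Heps.
    destruct (Hfd _ (Hin t Ht)) as [[[Hlin1 Hlin2] _] Hf].
    set (e' := eps / (hnorm w * hnorm q + 1)).
    assert (He' : 0 < e') by (unfold e'; apply Rdiv_lt_0_compat; nra).
    destruct (Hf e' He') as [d [Hd0 Hdd]].
    assert (Hdel : 0 < d / (hnorm w + 1)) by (apply Rdiv_lt_0_compat; lra).
    exists (mkposreal _ Hdel). intros h Hh0 Hh. simpl in Hh.
    assert (Ep : p (t + h) = p t +v h *v w) by (unfold p; hsolve).
    assert (Hnh : hnorm (h *v w) < d).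
    { rewrite hnorm_scal.
      apply (Rmult_lt_compat_r (hnorm w + 1)) in Hh; [|lra].
      unfold Rdiv in Hh. rewrite Rmult_assoc, Rinv_l in Hh by lra.
      pose proof (Rabs_pos h). nra. }
    specialize (Hdd _ Hnh). rewrite Hlin2 in Hdd. rewrite hnorm_scal in Hdd.
    assert (Eg : (g (t + h) - g t) / h - g' t =
        hinner (G (p t +v h *v w) -v G (p t) -v h *v DG (p t) w) q / h).
    { unfold g, g'. rewrite Ep. hexp. field. auto. }
    rewrite Eg. unfold Rdiv. rewrite Rabs_mult, Rabs_inv.
    pose proof (cs (G (p t +v h *v w) -v G (p t) -v h *v DG (p t) w) q).
    assert (0 < Rabs h) by (apply Rabs_pos_lt; auto).
    apply (Rmult_lt_reg_r (Rabs h)); auto.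
    rewrite Rmult_assoc, Rinv_l, Rmult_1_r by lra.
    apply Rle_lt_trans with (e' * (Rabs h * hnorm w) * hnorm q).
    { eapply Rle_trans; [eassumption|]. apply Rmult_le_compat_r; auto. }
    assert (e' * (hnorm w * hnorm q + 1) = eps) by (unfold e'; field; nra).
    nra. }
  destruct (MVT_cor2 g g' 0 1 Rlt_0_1 Hd) as [t0 [Eq Ht0]].
  assert (E1 : p 1 = u) by (unfold p, w; hsolve).
  assert (E0 : p 0 = c) by (unfold p, w; hsolve).
  unfold g in Eq. rewrite E1, E0 in Eq.
  replace (hinner (G u) q - hinner (G c) q) with (hinner q q) in Eq by (unfold q; hexp; ring).
  rewrite <- hnorm_sq in Eq.
  assert (Hb : g' t0 <= L * hnorm w * hnorm q).
  { unfold g'. eapply Rle_trans; [apply cs'|]. apply Rmult_le_compat_r; auto.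
    apply Hop, Hin. lra. }
  assert (Hqq : hnorm q * hnorm q <= (L * hnorm w) * hnorm q) by lra.
  destruct (Req_dec (hnorm q) 0) as [Z|Z].
  - rewrite Z. apply Rmult_le_pos; auto.
  - apply (Rmult_le_reg_r (hnorm q)); lra.
Qed.

Lemma core {X Y : Hilbert} (F : X -> Y) (DF : X -> X -> Y) DFs u w (y yv : Y) nu LF delta :
  0 <= LF -> 0 < nu -> F w = y -> hnorm (yv -v y) <= delta ->
  hnorm (F u -v F w -v DF u (u -v w)) <= nu * hnorm (F u -v F w) ->
  is_adjoint (DF u) (DFs u) -> opnorm_le (DF u) LF ->
  (2*(1-nu) - LF^2) * hnorm (F u -v yv) ^ 2 - 2*(1+nu)*delta*hnorm (F u -v yv)
   <= 2 * hinner (u -v w) (DFs u (F u -v yv)) - hnorm (DFs u (F u -v yv)) ^ 2.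
Proof.
  intros HLF Hnu Hw Hy Hcone Hadj Hop. subst y.
  set (r := F u -v yv). set (W := F u -v F w -v DF u (u -v w)).
  rewrite <- Hadj.
  assert (E : DF u (u -v w) = r +v (yv -v F w) -v W) by (unfold r, W; hsolve).
  rewrite E, inner_sub_l, hinner_add_l.
  assert (HW : hnorm W <= nu * hnorm (F u -v F w)) by exact Hcone.
  pose proof (cs'' (yv -v F w) r). pose proof (cs' W r).
  assert (Hfw : hnorm (F u -v F w) <= hnorm r + delta).
  { replace (F u -v F w) with (r +v (yv -v F w)) by (unfold r; hsolve).
    pose proof (htri r (yv -v F w)). lra. }
  pose proof (adj_bound _ _ _ HLF Hadj Hop r) as Hg.
  pose proof (hnorm_nonneg r). pose proof (hnorm_nonneg W). pose proof (hnorm_nonneg (yv -v F w)).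
  pose proof (hnorm_nonneg (DFs u r)).
  rewrite <- (hnorm_sq r).
  assert (hnorm (DFs u r) ^ 2 <= LF^2 * hnorm r ^ 2) by nra.
  assert (hnorm (yv -v F w) * hnorm r <= delta * hnorm r) by nra.
  assert (hnorm (DFs u r) ^ 2 <= LF^2 * hnorm r ^ 2) by nra.
  assert (hnorm W * hnorm r <= nu * (hnorm r + delta) * hnorm r).
  { apply Rmult_le_compat_r; auto. nra. }
  assert (hnorm r ^ 2 = hnorm r * hnorm r) by ring. lra.
Qed.

Lemma step_mono {X Y : Hilbert} (F Ah : X -> Y) (DFs : X -> Y -> X) (DA : X -> X -> Y) DAs
  u w yv lam Q CA Cl LA rho :
  0 <= LA -> 0 <= CA -> 0 <= rho -> is_adjoint (DA u) (DAs u) -> opnorm_le (DA u) LA ->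
  hnorm (u -v w) <= rho -> 0 <= lam -> lam * LA * CA <= rho ->
  lam <= Cl * hnorm (F u -v yv) ^ 2 ->
  hnorm (Ah u -v yv) <= CA ->
  Q <=
    2 * hinner (u -v w) (DFs u (F u -v yv)) - hnorm (DFs u (F u -v yv)) ^ 2 ->
  3 * (LA * CA * rho) * (Cl * hnorm (F u -v yv) ^ 2) <= Q ->
  hnorm (u -v DFs u (F u -v yv) -v lam *v DAs u (Ah u -v yv) -v w) <= hnorm (u -v w).
Proof.
  intros HLA HCA Hrho Hadj Hop He Hl0 Hl1 Hl2 HA Hc1 Hc2.
  set (R2 := hnorm (F u -v yv) ^ 2) in *.
  set (e := u -v w) in *. set (g := DFs u (F u -v yv)) in *.
  set (a := DAs u (Ah u -v yv)).
  set (d := e -v g).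
  replace (u -v g -v lam *v a -v w) with (d -v lam *v a) by (unfold d, e; hsolve).
  assert (Hd2 : hnorm d ^ 2 <= hnorm e ^ 2 - Q).
  { rewrite !hnorm_pow2. unfold d. hexp. rewrite !inner_sub_r, (hinner_sym _ g e).
    rewrite hnorm_pow2 in Hc1. lra. }
  assert (HR : 0 <= Cl * R2) by lra.
  assert (H3p : 0 <= 3 * (LA * CA * rho) * (Cl * R2)).
  { apply Rmult_le_pos; auto. repeat apply Rmult_le_pos; lra. }
  pose proof (hnorm_nonneg d) as Nd. pose proof (hnorm_nonneg e) as Ne.
  assert (Hde : hnorm d <= hnorm e).
  { apply sq_le; auto. assert (hnorm d ^ 2 <= hnorm e ^2) by lra. nra. }
  assert (Ha : hnorm a <= LA * CA).
  { pose proof (adj_bound _ _ _ HLA Hadj Hop (Ah u -v yv)) as Hb. fold a in Hb.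
    pose proof (hnorm_nonneg (Ah u -v yv)). nra. }
  pose proof (hnorm_nonneg a) as Na.
  set (M := LA * CA) in *.
  assert (HlM : lam * M <= rho) by (unfold M; lra).
  apply sq_le; auto.
  rewrite !hnorm_sq. hexp. rewrite !inner_sub_r, !inner_scal_r, (hinner_sym _ a d).
  rewrite <- !hnorm_sq.
  assert (E2 : hnorm e ^ 2 = hnorm e * hnorm e) by ring.
  assert (E3 : hnorm d ^ 2 = hnorm d * hnorm d) by ring.
  pose proof (cs'' d a).
  assert (T1 : lam * hnorm d * hnorm a <= lam * rho * M).
  { apply Rmult_le_compat; try nra. }
  assert (T2 : lam * hnorm a <= lam * M) by nra.
  assert (T3 : (lam * hnorm a) * (lam * hnorm a) <= rho * (lam * M)).
  { pose proof (Rmult_le_pos _ _ Hl0 Na). assert (0 <= lam * M) by nra. nra. }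
  assert (T4 : rho * M * lam <= rho * M * (Cl * R2)).
  { apply Rmult_le_compat_l; auto. unfold M; repeat apply Rmult_le_pos; lra. }
  nra.
Qed.

Definition cvP {H : Hilbert} (P : nat -> Prop) (s : nat -> H) (l : H) :=
  forall eps, 0 < eps -> exists N, forall n, (N <= n)%nat -> P n -> hnorm (s n -v l) < eps.
Definition cvPR (P : nat -> Prop) (s : nat -> R) (l : R) :=
  forall eps, 0 < eps -> exists N, forall n, (N <= n)%nat -> P n -> Rabs (s n - l) < eps.

Lemma cvP_sub {H : Hilbert} P (s t : nat -> H) l m :
  cvP P s l -> cvP P t m -> cvP P (fun n => s n -v t n) (l -v m).
Proof.
  intros Hs Ht eps Heps.
  destruct (Hs (eps/2)) as [N1 H1]; [lra|]. destruct (Ht (eps/2)) as [N2 H2]; [lra|].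
  exists (max N1 N2). intros n Hn Pn.
  replace (s n -v t n -v (l -v m)) with ((s n -v l) -v (t n -v m)) by hsolve.
  eapply Rle_lt_trans; [apply htri_sub|].
  specialize (H1 n ltac:(lia) Pn). specialize (H2 n ltac:(lia) Pn). lra.
Qed.

Lemma cvP_frechet {X Y : Hilbert} P (G : X -> Y) DG u L (x : nat -> X) :
  frechet_deriv G u DG -> opnorm_le DG L -> 0 <= L -> cvP P x u ->
  cvP P (fun n => G (x n)) (G u).
Proof.
  intros [_ Hf] Hop HL Hx eps Heps.
  destruct (Hf 1 Rlt_0_1) as [d [Hd Hdd]].
  set (eta := Rmin d (eps / (L + 2))).
  assert (Heta : 0 < eta) by (apply Rmin_pos; auto; apply Rdiv_lt_0_compat; lra).
  destruct (Hx eta Heta) as [N HN]. exists N. intros n Hn Pn.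
  specialize (HN n Hn Pn).
  assert (Hh : hnorm (x n -v u) < d) by (pose proof (Rmin_l d (eps/(L+2))); fold eta in H; lra).
  specialize (Hdd _ Hh).
  replace (u +v (x n -v u)) with (x n) in Hdd by hsolve.
  replace (G (x n) -v G u) with ((G (x n) -v G u -v DG (x n -v u)) +v DG (x n -v u)) by hsolve.
  eapply Rle_lt_trans; [apply htri|].
  pose proof (Hop (x n -v u)).
  assert (eta <= eps / (L+2)) by apply Rmin_r.
  assert (eps / (L+2) * (L+2) = eps) by (field; lra).
  pose proof (hnorm_nonneg (x n -v u)).
  nra.
Qed.

Lemma cvP_adj {X Y : Hilbert} P (DF : X -> X -> Y) DFs c rho u L (x : nat -> X) (r : nat -> Y) r0 :
  (forall n, P n -> in_ball c rho (x n)) -> in_ball c rho u ->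
  (forall u, in_ball c rho u -> forall eps, 0 < eps -> exists d, 0 < d /\
     forall w, in_ball c rho w -> hnorm (w -v u) < d ->
       opnorm_le (fun h => DF w h -v DF u h) eps) ->
  (forall v, in_ball c rho v -> is_adjoint (DF v) (DFs v)) ->
  (forall v, in_ball c rho v -> opnorm_le (DF v) L) -> 0 <= L ->
  cvP P x u -> cvP P r r0 -> cvP P (fun n => DFs (x n) (r n)) (DFs u r0).
Proof.
  intros Hb Hu Hc Hadj Hop HL Hx Hr eps Heps.
  pose proof (hnorm_nonneg r0) as N0.
  set (eta := eps / (2 * (hnorm r0 + 1))).
  assert (Heta : 0 < eta) by (apply Rdiv_lt_0_compat; lra).
  destruct (Hc u Hu eta Heta) as [d [Hd Hdd]].
  destruct (Hx d Hd) as [N1 H1].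
  destruct (Hr (eps / (2 * (L + 1)))) as [N2 H2]; [apply Rdiv_lt_0_compat; lra|].
  exists (max N1 N2). intros n Hn Pn.
  specialize (H1 n ltac:(lia) Pn). specialize (H2 n ltac:(lia) Pn).
  assert (Hbd : hnorm (DFs (x n) (r n) -v DFs u r0) <=
                L * hnorm (r n -v r0) + eta * hnorm r0).
  { apply norm_le_of_inner.
    - pose proof (hnorm_nonneg (r n -v r0)). nra.
    - intro h. rewrite inner_sub_r, <- (Hadj _ (Hb n Pn)), <- (Hadj _ Hu).
      replace (hinner (DF (x n) h) (r n) - hinner (DF u h) r0) with
        (hinner (DF (x n) h) (r n -v r0) + hinner (DF (x n) h -v DF u h) r0)
        by (rewrite inner_sub_r, inner_sub_l; ring).
      pose proof (cs' (DF (x n) h) (r n -v r0)). pose proof (cs' (DF (x n) h -v DF u h) r0).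
      pose proof (Hop _ (Hb n Pn) h). pose proof (Hdd _ (Hb n Pn) H1 h). simpl in H3.
      pose proof (hnorm_nonneg h). pose proof (hnorm_nonneg (r n -v r0)).
      pose proof (hnorm_nonneg (DF (x n) h)).
      assert (hnorm (DF (x n) h) * hnorm (r n -v r0) <= L * hnorm h * hnorm (r n -v r0)) by nra.
      assert (hnorm (DF (x n) h -v DF u h) * hnorm r0 <= eta * hnorm h * hnorm r0) by nra.
      nra. }
  eapply Rle_lt_trans; [exact Hbd|].
  assert (eta * hnorm r0 < eps / 2).
  { unfold eta. unfold Rdiv. rewrite Rinv_mult.
    assert (hnorm r0 * / (hnorm r0 + 1) < 1).
    { apply (Rmult_lt_reg_r (hnorm r0 + 1)); [lra|]. rewrite Rmult_assoc, Rinv_l; lra. }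
    assert (0 < eps * / 2) by lra.
    replace (eps * (/ 2 * / (hnorm r0 + 1)) * hnorm r0) with ((eps * / 2) * (hnorm r0 * / (hnorm r0 + 1))) by ring.
    nra. }
  assert (L * hnorm (r n -v r0) <= eps / 2).
  { assert (eps / (2 * (L + 1)) * (L + 1) = eps / 2) by (field; lra).
    pose proof (hnorm_nonneg (r n -v r0)). nra. }
  lra.
Qed.

Lemma cvP_scal {H : Hilbert} P (f : nat -> R) f0 (a : nat -> H) a0 :
  cvPR P f f0 -> cvP P a a0 -> cvP P (fun n => f n *v a n) (f0 *v a0).
Proof.
  intros Hf Ha eps Heps.
  pose proof (hnorm_nonneg a0) as N0. pose proof (Rabs_pos f0) as F0.
  destruct (Hf (eps / (2 * (hnorm a0 + 1)))) as [N1 H1]; [apply Rdiv_lt_0_compat; lra|].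
  destruct (Ha (Rmin 1 (eps / (2 * (Rabs f0 + 1))))) as [N2 H2].
  { apply Rmin_pos; [lra|]. apply Rdiv_lt_0_compat; lra. }
  exists (max N1 N2). intros n Hn Pn.
  specialize (H1 n ltac:(lia) Pn). specialize (H2 n ltac:(lia) Pn).
  pose proof (Rmin_l 1 (eps / (2 * (Rabs f0 + 1)))). pose proof (Rmin_r 1 (eps / (2 * (Rabs f0 + 1)))).
  replace (f n *v a n -v f0 *v a0) with ((f n - f0) *v a n +v f0 *v (a n -v a0)) by hsolve.
  eapply Rle_lt_trans; [apply htri|]. rewrite !hnorm_scal.
  assert (hnorm (a n) <= hnorm a0 + 1).
  { replace (a n) with (a0 +v (a n -v a0)) by hsolve. pose proof (htri a0 (a n -v a0)). lra. }
  pose proof (hnorm_nonneg (a n)). pose proof (Rabs_pos (f n - f0)).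
  assert (Rabs (f n - f0) * hnorm (a n) <= eps / 2).
  { assert (eps / (2 * (hnorm a0 + 1)) * (hnorm a0 + 1) = eps / 2) by (field; lra). nra. }
  assert (Rabs f0 * hnorm (a n -v a0) < eps / 2).
  { assert (eps / (2 * (Rabs f0 + 1)) * (Rabs f0 + 1) = eps / 2) by (field; lra).
    pose proof (hnorm_nonneg (a n -v a0)). nra. }
  lra.
Qed.

Lemma CA_bound {X Y : Hilbert} (Ah : X -> Y) DA udag rho LA (yv : Y) v :
  0 <= LA -> C1_on_ball Ah DA udag rho ->
  (forall u, in_ball udag rho u -> opnorm_le (DA u) LA) ->
  in_ball udag rho v ->
  hnorm (Ah v -v yv) <= LA * rho + hnorm (Ah udag) + hnorm yv.
Proof.
  intros HLA [Hfd _] Hop Hv.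
  replace (Ah v -v yv) with ((Ah v -v Ah udag) +v Ah udag -v yv) by hsolve.
  eapply Rle_trans; [apply htri_sub|].
  pose proof (htri (Ah v -v Ah udag) (Ah udag)).
  pose proof (mvt_bound Ah DA udag rho LA v HLA Hfd Hop Hv).
  unfold in_ball in Hv. pose proof (hnorm_nonneg (v -v udag)).
  assert (LA * hnorm (v -v udag) <= LA * rho) by (apply Rmult_le_compat_l; auto).
  lra.
Qed.

Lemma one_step {X Y : Hilbert} (F Ah : X -> Y) (DF DA : X -> X -> Y) (DFs DAs : X -> Y -> X)
  (y : Y) udag rho nu LF LA u w (yv : Y) lam Cl delta :
  0 < rho -> 0 <= LA -> 0 <= LF -> 0 < nu ->
  (forall u ut, in_ball udag rho u -> in_ball udag rho ut ->
     hnorm (F u -v F ut -v DF u (u -v ut)) <= nu * hnorm (F u -v F ut)) ->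
  C1_on_ball Ah DA udag rho ->
  (forall u, in_ball udag rho u -> is_adjoint (DF u) (DFs u)) ->
  (forall u, in_ball udag rho u -> is_adjoint (DA u) (DAs u)) ->
  (forall u, in_ball udag rho u -> opnorm_le (DF u) LF) ->
  (forall u, in_ball udag rho u -> opnorm_le (DA u) LA) ->
  in_ball udag rho u -> in_ball udag rho w -> F w = y -> hnorm (u -v w) <= rho ->
  hnorm (yv -v y) <= delta -> 0 <= lam ->
  lam * LA * (LA * rho + hnorm (Ah udag) + hnorm yv) <= rho ->
  lam <= Cl * hnorm (F u -v yv) ^ 2 ->
  3 * (LA * (LA * rho + hnorm (Ah udag) + hnorm yv) * rho) * (Cl * hnorm (F u -v yv) ^ 2)
    <= (2*(1-nu) - LF^2) * hnorm (F u -v yv) ^ 2 - 2*(1+nu)*delta*hnorm (F u -v yv) ->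
  hnorm (u -v DFs u (F u -v yv) -v lam *v DAs u (Ah u -v yv) -v w) <= hnorm (u -v w).
Proof.
  intros Hrho HLA HLF Hnu Hcone HC1 HadF HadA HopF HopA Hu Hw HFw Huw Hy Hl0 Hl1 Hl2 Hc.
  pose proof (hnorm_nonneg (Ah udag)). pose proof (hnorm_nonneg yv).
  eapply (step_mono F Ah DFs DA DAs u w yv lam _ (LA * rho + hnorm (Ah udag) + hnorm yv) Cl LA rho);
    auto.
  - pose proof (Rmult_le_pos _ _ HLA (Rlt_le _ _ Hrho)). lra.
  - lra.
  - apply (CA_bound Ah DA udag rho LA); auto.
  -
    apply (core F DF DFs u w y yv nu LF delta); auto.
  - exact Hc.
Qed.

Lemma iter_S {X Y : Hilbert} (F : X -> Y) DFs A DAs phi yv u0 k :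
  iterate F DFs A DAs phi yv u0 (S k) =
  iterate F DFs A DAs phi yv u0 k -v DFs (iterate F DFs A DAs phi yv u0 k)
     (F (iterate F DFs A DAs phi yv u0 k) -v yv)
  -v phi k (iterate F DFs A DAs phi yv u0 k) yv *v
     DAs (iterate F DFs A DAs phi yv u0 k) (A (iterate F DFs A DAs phi yv u0 k) -v yv).
Proof. reflexivity. Qed.

Lemma const_ok x Cl B R2 L2 : 0 <= x -> 0 <= Cl*R2 -> 0 <= R2 -> 0 <= L2 -> B - 2*x*Cl > 0 ->
  3*x*(Cl*R2) <= (2*B + L2)*R2.
Proof. intros. assert (0 <= (B - 2*x*Cl)*R2) by nra. nra. Qed.

Lemma le_eps a b : (forall eps, 0 < eps -> a <= b + eps) -> a <= b.
Proof. intros H. destruct (Rle_or_lt a b); auto. specialize (H ((a-b)/2)). lra. Qed.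

Lemma unif (Q : nat -> nat -> Prop) :
  (forall j, exists N, forall n, (N <= n)%nat -> Q j n) ->
  forall K, exists N, forall n, (N <= n)%nat -> forall j, (j <= K)%nat -> Q j n.
Proof.
  intros H K. induction K.
  - destruct (H 0%nat) as [N HN]. exists N. intros n Hn j Hj.
    replace j with 0%nat by lia. auto.
  - destruct IHK as [N1 H1]. destruct (H (S K)) as [N2 H2]. exists (max N1 N2).
    intros n Hn j Hj. destruct (Nat.eq_dec j (S K)) as [->|].
    + apply H2. lia.
    + apply H1; lia.
Qed.

Lemma cvP_mono {H : Hilbert} (P P' : nat -> Prop) (s : nat -> H) l :
  cvP P s l -> (forall n, P' n -> P n) -> cvP P' s l.
Proof. intros Hs HP e He. destruct (Hs e He) as [N HN]. exists N. auto. Qed.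

Lemma triv_space {X Y : Hilbert} (T : X -> Y) L : L < 0 -> opnorm_le T L -> forall x z : X, x = z.
Proof.
  intros HL Hop x z. apply hnorm_sub_eq0.
  pose proof (Hop (x -v z)). pose proof (hnorm_nonneg (T (x -v z))).
  pose proof (hnorm_nonneg (x -v z)). nra.
Qed.

Lemma adj_zero {X Y : Hilbert} (T : X -> Y) Ts : is_adjoint T Ts -> Ts hzero = hzero.
Proof.
  intros Ha. apply hnorm_eq0. apply Rle_antisym; [|apply hnorm_nonneg].
  apply norm_le_of_inner; [lra|]. intro h. rewrite <- Ha, inner_zero_r. 
  pose proof (hnorm_nonneg h). lra.
Qed.

Lemma const_noisy x Cl R d tau nu LF :
  0 <= x -> 0 <= Cl * R^2 -> 0 <= R -> 0 < tau -> 0 <= d -> tau * d < R -> 0 < nu ->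
  (1 - LF^2 - nu - (1+nu)/tau) - 2*x*Cl > 0 ->
  3*x*(Cl*R^2) <= (2*(1-nu) - LF^2)*R^2 - 2*(1+nu)*d*R.
Proof.
  intros Hx Hq HR Ht Hd Htd Hnu Hc.
  assert (E : d * R <= R^2 * / tau).
  { apply (Rmult_le_reg_r tau); auto. replace (R^2 * / tau * tau) with (R^2) by (field; lra). nra. }
  pose proof (const_ok x Cl (1 - LF^2 - nu - (1+nu)/tau) (R^2) (LF^2) Hx Hq
     ltac:(apply pow2_ge_0) ltac:(apply pow2_ge_0) Hc).
  unfold Rdiv in *.
  assert ((1+nu) * (d * R) <= (1+nu) * (R^2 * / tau)) by (apply Rmult_le_compat_l; lra).
  nra.
Qed.

Theorem mainTheorem5
  (X Y : Hilbert)
  (F Ah : X -> Y)                       (* F and \hat A *)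
  (DF DA : X -> X -> Y)                 (* F'(u), \hat A'(u) *)
  (DFs DAs : X -> Y -> X)               (* F'(u)^*, \hat A'(u)^* *)
  (y : Y) (udag u0 : X) (rho nu LF LA C0lam : R)
  (phi : nat -> X -> Y -> R)            (* step-parameter functions phi_k *)
  (ubar : X)
  (delta : nat -> R) (yn : nat -> Y) (kn : nat -> nat)
  (tau Clam : R) :
  (* ---- hypotheses of the noise-free convergence theorem ---- *)
  F udag = y ->
  0 < rho ->
  (forall u, in_ball udag rho u -> in_ball u0 (2 * rho) u) ->
  in_ball udag rho u0 ->
  0 < nu ->
  (forall u ut, in_ball udag rho u -> in_ball udag rho ut ->
     hnorm (F u -v F ut -v DF u (u -v ut)) <= nu * hnorm (F u -v F ut)) ->
  C1_on_ball F DF udag rho ->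
  C1_on_ball Ah DA udag rho ->
  (forall u, in_ball udag rho u -> is_adjoint (DF u) (DFs u)) ->
  (forall u, in_ball udag rho u -> is_adjoint (DA u) (DAs u)) ->
  (forall u, in_ball udag rho u -> opnorm_le (DF u) LF) ->
  (forall u, in_ball udag rho u -> opnorm_le (DA u) LA) ->
  (exists CN, 0 < CN /\ CN <= hnorm (Ah udag -v y)) ->
  (forall k x z, 0 <= phi k x z) ->
  (let uk := iterate F DFs Ah DAs phi y u0 in
   let C0A := LA * rho + hnorm (Ah udag) + hnorm y in
   (forall k, phi k (uk k) y * LA * C0A <= rho) /\
   (forall k, phi k (uk k) y <= C0lam * (hnorm (F (uk k) -v y)) ^ 2) /\
   1 - nu - LF ^ 2 - 2 * LA * C0A * C0lam * rho > 0) ->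
  (* continuity of phi_k at the relevant points (u_k, y) *)
  (forall k eps, 0 < eps -> exists d, 0 < d /\
     forall x z, hnorm (x -v iterate F DFs Ah DAs phi y u0 k) < d -> hnorm (z -v y) < d ->
       Rabs (phi k x z - phi k (iterate F DFs Ah DAs phi y u0 k) y) < eps) ->
  (* ubar is the limit of the noise-free iteration (so F ubar = y) *)
  hconverges (iterate F DFs Ah DAs phi y u0) ubar ->
  F ubar = y ->
  (* ---- noisy data and discrepancy principle ---- *)
  (forall eps, 0 < eps -> exists N, forall n, (N <= n)%nat -> Rabs (delta n) < eps) ->
  (forall n, hnorm (yn n -v y) <= delta n) ->
  0 < tau ->
  0 <= 1 - LF ^ 2 - nu - (1 + nu) / tau ->
  0 < Clam ->
  (forall n,
     let un := iterate F DFs Ah DAs phi (yn n) u0 in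
     let CnA := LA * rho + hnorm (Ah udag) + hnorm (yn n) in
     (forall k, (k < kn n)%nat ->
        phi k (un k) (yn n) * LA * CnA <= rho /\
        phi k (un k) (yn n) <= Clam * (hnorm (F (un k) -v yn n)) ^ 2) /\
     (1 - LF ^ 2 - nu - (1 + nu) / tau) - 2 * LA * CnA * Clam * rho > 0) ->
  (* kn n is the discrepancy-principle stopping index: the first k with
     ||F(u_k^{delta_n}) - y_n|| <= tau * delta_n *)
  (forall n,
     let un := iterate F DFs Ah DAs phi (yn n) u0 in
     hnorm (F (un (kn n)) -v yn n) <= tau * delta n /\
     (forall k, (k < kn n)%nat -> tau * delta n < hnorm (F (un k) -v yn n))) ->
  hconverges (fun n => iterate F DFs Ah DAs phi (yn n) u0 (kn n)) ubar.
Proof.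
  intros HFud Hrho Hball2 Hu0 Hnu Hcone HC1F HC1A HadF HadA HopF HopA HCN Hphi0 HNF Hphic
    Hconv HFubar Hdelta Hyn Htau HCt HClam HNoisy HStop.
  assert (Hud : in_ball udag rho udag).
  { unfold in_ball. rewrite hsub_self, hnorm_zero. lra. }
  destruct (Rlt_or_le LA 0) as [HLAn|HLA].
  { pose proof (triv_space _ _ HLAn (HopA _ Hud)) as T.
    intros e He. exists 0%nat. intros n _. match goal with |- hnorm (?a -v _) < _ => rewrite (T a ubar) end. rewrite hsub_self, hnorm_zero. auto. }
  destruct (Rlt_or_le LF 0) as [HLFn|HLF].
  { pose proof (triv_space _ _ HLFn (HopF _ Hud)) as T.
    intros e He. exists 0%nat. intros n _. match goal with |- hnorm (?a -v _) < _ => rewrite (T a ubar) end. rewrite hsub_self, hnorm_zero. auto. }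
  cbv zeta in HNF, HNoisy, HStop. destruct HNF as [HN1 [HN2 HN3]].
  set (u := iterate F DFs Ah DAs phi y u0) in *.
  set (U := fun n => iterate F DFs Ah DAs phi (yn n) u0).
  assert (Hdn : forall n, 0 <= delta n).
  { intro n. pose proof (Hyn n). pose proof (hnorm_nonneg (yn n -v y)). lra. }
  assert (NF1 : forall k, in_ball udag rho (u k)).
  { induction k as [|k IH]; [exact Hu0|].
    unfold in_ball. unfold u. rewrite iter_S. fold u.
    eapply Rle_trans; [|exact IH].
    apply (one_step F Ah DF DA DFs DAs y udag rho nu LF LA (u k) udag y _ C0lam 0); auto.
    - rewrite hsub_self, hnorm_zero; lra.
    - pose proof (HN2 k) as A1. pose proof (Hphi0 k (u k) y) as A2.
      pose proof (hnorm_nonneg (Ah udag)). pose proof (hnorm_nonneg y).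
      set (R := hnorm (F (u k) -v y)) in *.
      assert (0 <= LA * (LA * rho + hnorm (Ah udag) + hnorm y) * rho).
      { apply Rmult_le_pos; [|lra]. apply Rmult_le_pos; [lra|]. nra. }
      pose proof (const_ok (LA * (LA * rho + hnorm (Ah udag) + hnorm y) * rho) C0lam
          (1 - nu - LF^2) (R^2) (LF^2)) as CO.
      assert (0 <= R^2) by (apply pow2_ge_0). assert (0 <= LF^2) by (apply pow2_ge_0).
      assert (T := CO ltac:(auto) ltac:(lra) ltac:(auto) ltac:(auto) ltac:(lra)).
      lra. }
  assert (NS : forall n k w, (k < kn n)%nat ->
     in_ball udag rho (iterate F DFs Ah DAs phi (yn n) u0 k) ->
     in_ball udag rho w -> F w = y ->
     hnorm (iterate F DFs Ah DAs phi (yn n) u0 k -v w) <= rho ->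
     hnorm (iterate F DFs Ah DAs phi (yn n) u0 (S k) -v w) <=
     hnorm (iterate F DFs Ah DAs phi (yn n) u0 k -v w)).
  { intros n k w Hk Hin Hw HFw Hd. rewrite iter_S.
    destruct (HNoisy n) as [HA HB]. destruct (HA k Hk) as [HA1 HA2].
    destruct (HStop n) as [_ HS]. specialize (HS k Hk).
    apply (one_step F Ah DF DA DFs DAs y udag rho nu LF LA _ w (yn n) _ Clam (delta n)); auto.
    pose proof (Hphi0 k (iterate F DFs Ah DAs phi (yn n) u0 k) (yn n)) as A2.
    pose proof (hnorm_nonneg (Ah udag)). pose proof (hnorm_nonneg (yn n)).
    apply (const_noisy _ _ _ _ tau); auto.
    - apply Rmult_le_pos; [|lra]. apply Rmult_le_pos; [lra|]. nra.
    - lra.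
    - apply hnorm_nonneg.
    - lra. }
  assert (NB1 : forall n k, (k <= kn n)%nat ->
     in_ball udag rho (iterate F DFs Ah DAs phi (yn n) u0 k)).
  { intros n k. induction k as [|k IH]; intro Hk; [exact Hu0|].
    unfold in_ball. eapply Rle_trans; [|apply IH; lia].
    apply NS; auto; try lia. apply IH; lia. exact (IH ltac:(lia)). }
  assert (NF2 : in_ball udag rho ubar).
  { unfold in_ball. apply le_eps. intros e He. destruct (Hconv e He) as [N HN].
    specialize (HN N (le_n N)). pose proof (hdist_tri ubar (u N) udag) as T.
    rewrite hnorm_sub_sym in HN. pose proof (NF1 N) as T2. unfold in_ball in T2. lra. }
  assert (NF3 : forall j, F (u j) = y -> u j = ubar).
  { intros j Hj.
    assert (Hstay : forall m, u (m + j)%nat = u j).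
    { induction m as [|m IH]; [reflexivity|].
      change (S m + j)%nat with (S (m + j)). unfold u. rewrite iter_S. fold u.
      pose proof (HN2 (m + j)%nat) as P2. pose proof (Hphi0 (m+j)%nat (u (m+j)%nat) y) as P0.
      rewrite IH in P2, P0 |- *. rewrite Hj, hsub_self, hnorm_zero in P2. rewrite Hj, hsub_self.
      assert (Ep : phi (m + j)%nat (u j) y = 0) by lra. rewrite Ep.
      rewrite (adj_zero _ _ (HadF _ (NF1 j))). hsolve. }
    apply hnorm_sub_eq0. apply Rle_antisym; [|apply hnorm_nonneg].
    apply le_eps. intros e He. destruct (Hconv e He) as [N HN].
    specialize (HN (N + j)%nat ltac:(lia)). rewrite Hstay in HN. lra. }
  assert (NB2 : forall n k m, (k <= m)%nat -> (m <= kn n)%nat ->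
     hnorm (iterate F DFs Ah DAs phi (yn n) u0 k -v ubar) <= rho ->
     hnorm (iterate F DFs Ah DAs phi (yn n) u0 m -v ubar) <=
     hnorm (iterate F DFs Ah DAs phi (yn n) u0 k -v ubar)).
  { intros n k m. induction m as [|m IH]; intros Hkm Hm Hr.
    - assert (k = 0%nat) by lia. subst k. apply Rle_refl.
    - destruct (Nat.eq_dec k (S m)) as [->|Hne]; [lra|].
      pose proof (IH ltac:(lia) ltac:(lia) Hr) as IH'.
      eapply Rle_trans; [|exact IH'].
      apply NS; auto; first [lia | (apply NB1; lia) | lra]. }
  assert (Hz : forall P : nat -> Prop, cvP P yn y).
  { intros P e He. destruct (Hdelta e He) as [N HN]. exists N. intros n Hn _.
    specialize (HN n Hn). pose proof (Hyn n). pose proof (Rle_abs (delta n)). lra. }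
  assert (ST : forall k, cvP (fun n => (k <= kn n)%nat)
                 (fun n => iterate F DFs Ah DAs phi (yn n) u0 k) (u k)).
  { induction k as [|k IH].
    - intros e He. exists 0%nat. intros n _ _. simpl. rewrite hsub_self, hnorm_zero. lra.
    - set (P' := fun n => (S k <= kn n)%nat).
      assert (Hx : cvP P' (fun n => iterate F DFs Ah DAs phi (yn n) u0 k) (u k)).
      { apply (cvP_mono _ _ _ _ IH). unfold P'. intros; lia. }
      assert (Hb : forall n, P' n -> in_ball udag rho (iterate F DFs Ah DAs phi (yn n) u0 k)).
      { unfold P'. intros n Hn. apply NB1. lia. }
      pose proof (cvP_frechet P' F (DF (u k)) (u k) LF _ (proj1 HC1F _ (NF1 k)) (HopF _ (NF1 k)) HLF Hx) as HFx.
      pose proof (cvP_sub _ _ _ _ _ HFx (Hz P')) as Hr.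
      pose proof (cvP_adj P' DF DFs udag rho (u k) LF _ _ _ Hb (NF1 k) (proj2 HC1F) HadF HopF HLF Hx Hr) as Hg.
      pose proof (cvP_frechet P' Ah (DA (u k)) (u k) LA _ (proj1 HC1A _ (NF1 k)) (HopA _ (NF1 k)) HLA Hx) as HAx.
      pose proof (cvP_sub _ _ _ _ _ HAx (Hz P')) as Hr2.
      pose proof (cvP_adj P' DA DAs udag rho (u k) LA _ _ _ Hb (NF1 k) (proj2 HC1A) HadA HopA HLA Hx Hr2) as Ha.
      assert (Hphi : cvPR P' (fun n => phi k (iterate F DFs Ah DAs phi (yn n) u0 k) (yn n)) (phi k (u k) y)).
      { intros e He. destruct (Hphic k e He) as [d [Hd Hdd]].
        destruct (Hx d Hd) as [N1 H1]. destruct (Hz P' d Hd) as [N2 H2].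
        exists (max N1 N2). intros n Hn Pn. apply Hdd; [apply H1|apply H2]; auto; lia. }
      pose proof (cvP_sub _ _ _ _ _ (cvP_sub _ _ _ _ _ Hx Hg) (cvP_scal _ _ _ _ _ Hphi Ha)) as Hfin.
      exact Hfin. }
  assert (RS : forall j, u j <> ubar -> exists N, forall n, (N <= n)%nat -> kn n <> j).
  { intros j Hj.
    assert (HF : F (u j) <> y) by (intro E; apply Hj, NF3, E).
    set (eta := hnorm (F (u j) -v y)).
    assert (Heta : 0 < eta).
    { pose proof (hnorm_nonneg (F (u j) -v y)). destruct (Req_dec eta 0) as [Z|Z].
      - exfalso. apply HF, hnorm_sub_eq0. exact Z.
      - unfold eta in *. lra. }
    set (Pj := fun n => (j <= kn n)%nat).
    pose proof (cvP_frechet Pj F (DF (u j)) (u j) LF _ (proj1 HC1F _ (NF1 j)) (HopF _ (NF1 j)) HLF (ST j)) as HFx.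
    pose proof (cvP_sub _ _ _ _ _ HFx (Hz Pj)) as Hc.
    destruct (Hc (eta/2)) as [N1 H1]; [lra|].
    destruct (Hdelta (eta/(2*tau))) as [N2 H2]; [apply Rdiv_lt_0_compat; lra|].
    exists (max N1 N2). intros n Hn E.
    specialize (H1 n ltac:(lia) ltac:(unfold Pj; lia)). specialize (H2 n ltac:(lia)).
    destruct (HStop n) as [HS _]. rewrite E in HS.
    pose proof (Rle_abs (delta n)).
    assert (tau * delta n < eta / 2).
    { assert (tau * (eta / (2 * tau)) = eta / 2) by (field; lra).
      assert (tau * delta n < tau * (eta / (2*tau))) by (apply Rmult_lt_compat_l; lra). lra. }
    set (a := F (iterate F DFs Ah DAs phi (yn n) u0 j) -v yn n) in *.
    assert (eta <= hnorm (a -v (F (u j) -v y)) + hnorm a).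
    { unfold eta. rewrite (hnorm_sub_sym a).
      replace (F (u j) -v y) with ((F (u j) -v y) -v a +v a) at 1 by hsolve. apply htri. }
    lra. }
  intros eps Heps.
  set (e' := Rmin eps rho).
  assert (He' : 0 < e') by (apply Rmin_pos; lra).
  assert (e' <= eps) by apply Rmin_l. assert (e' <= rho) by apply Rmin_r.
  destruct (Hconv (e'/2)) as [K HK]; [lra|].
  destruct (unif (fun j n => (j <= kn n)%nat ->
      hnorm (iterate F DFs Ah DAs phi (yn n) u0 j -v u j) < e'/2)
      (fun j => ST j (e'/2) ltac:(lra)) K) as [NA HA].
  destruct (unif (fun j n => kn n = j -> u j = ubar)) with (K := K) as [NB HB].
  { intro j. destruct (classic (u j = ubar)) as [E|E].
    - exists 0%nat. auto.
    - destruct (RS j E) as [N HN]. exists N. intros n Hn Ek. exfalso. exact (HN n Hn Ek). }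
  exists (max NA NB). intros n Hn. cbv beta.
  destruct (Compare_dec.le_lt_dec K (kn n)) as [HKn|HKn].
  - specialize (HA n ltac:(lia) K (le_n K) HKn). specialize (HK K (le_n K)).
    pose proof (hdist_tri (iterate F DFs Ah DAs phi (yn n) u0 K) (u K) ubar).
    pose proof (NB2 n K (kn n) HKn (le_n _) ltac:(lra)). lra.
  - specialize (HB n ltac:(lia) (kn n) ltac:(lia) eq_refl).
    specialize (HA n ltac:(lia) (kn n) ltac:(lia) (le_n _)).
    rewrite HB in HA. lra.
Qed.
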